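(* Let $G$ be a finite multigraph (parallel edges allowed, no loops), let $k$ be a positive integer, and let $A$ be a proper subset of $V(G)$ such that between any two distinct vertices of $A$ there are $2k$ pairwise edge-disjoint paths in $G$. Assume that there is no edge of $G$ with both endvertices outside of $A$, and let $s$ be a vertex not in $A$ with $\deg(s) > 3$. Then the lifting graph $L(G,s,\tau_A)$ is either (a) a complete multipartite graph, or (b) the disjoint union of an isolated vertex and a complete bipartite graph whose two partition classes have equal size; in particular, this case can only occur if $\deg(s)$ is odd.
   Context: Lifting two distinct edges $sx, sy$ incident with $s$ means deleting them and adding a new edge $xy$ (possibly parallel to existing edges). $\lambda_G(x,y)$ denotes the maximum number of pairwise edge-disjoint $x$–$y$ paths in $G$. The target function $\tau_A$ is defined on pairs of vertices by $\tau_A(x,y) = 2k$ if $x,y \in A$ and $\tau_A(x,y)=0$ otherwise. A pair of edges incident with $s$ is $\tau_A$-admissible if after lifting them the resulting graph $G'$ satisfies $\lambda_{G'}(x,y) \geq \tau_A(x,y)$ for all distinct $x,y \in V(G)\setminus\{s\}$. The lifting graph $L(G,s,\tau_A)$ is the graph whose vertices are the edges incident with $s$, two of them being adjacent if and only if they form a $\tau_A$-admissible pair. *)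

(* Defs.v *)
From mathcomp Require Import all_boot.
Set Implicit Arguments. Unset Strict Implicit. Unset Printing Implicit Defensive.

(* A finite multigraph on the vertex set V (a finType) is an
   edge list G : seq (V * V); the edges are the indices 0 .. size G - 1, so
   parallel edges are distinct edges. *)

Section MultiGraph.
Variable V : finType.

Definition loopless (G : seq (V * V)) : bool := all (fun e => e.1 != e.2) G.

Definition incident (s : V) (e : V * V) : bool := (e.1 == s) || (e.2 == s).

Definition other (s : V) (e : V * V) : V := if e.1 == s then e.2 else e.1.

(* degree (no loops, so each incident edge counts once) *)
Definition deg (G : seq (V * V)) (s : V) : nat := count (incident s) G.

Definition joins (G : seq (V * V)) (t : nat) (a b : V) : bool :=
  (t < size G) && ((nth (a, a) G t == (a, b)) || (nth (a, a) G t == (b, a))).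

(* (x :: vs) is the vertex sequence of a path from x to y whose i-th edge is
   the edge with index nth 0 es i *)
Definition is_path (G : seq (V * V)) (x y : V) (vs : seq V) (es : seq nat) : Prop :=
  [/\ uniq (x :: vs), last x vs = y, size es = size vs &
      forall i, i < size vs -> joins G (nth 0 es i) (nth x (x :: vs) i) (nth x vs i)].

Definition edge_disjoint_paths (G : seq (V * V)) (x y : V) (n : nat) : Prop :=
  exists P : seq (seq V * seq nat),
    [/\ size P = n,
        forall p, p \in P -> is_path G x y p.1 p.2 &
        uniq (flatten (map snd P))].

(* lifting edges number i and j (both incident with s): delete them, add xy *)
Definition lift (G : seq (V * V)) (s : V) (i j : nat) : seq (V * V) :=
  (other s (nth (s, s) G i), other s (nth (s, s) G j))
    :: [seq nth (s, s) G t | t <- iota 0 (size G) & (t != i) && (t != j)].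

Definition tauA (A : {set V}) (k : nat) (x y : V) : nat :=
  if (x \in A) && (y \in A) then 2 * k else 0.

Definition admissible (G : seq (V * V)) (A : {set V}) (k : nat) (s : V) (i j : nat) : Prop :=
  forall x y : V, x != s -> y != s -> x != y ->
    edge_disjoint_paths (lift G s i j) x y (tauA A k x y).

(* vertices of the lifting graph: the edges incident with s *)
Definition LVert (G : seq (V * V)) (s : V) :=
  {i : 'I_(size G) | incident s (nth (s, s) G i)}.

Definition Ladj (G : seq (V * V)) (A : {set V}) (k : nat) (s : V)
  (u v : LVert G s) : Prop :=
  val u != val v /\ admissible G A k s (val (val u)) (val (val v)).

End MultiGraph.

Definition complete_multipartite (T : finType) (adj : T -> T -> Prop) : Prop :=
  exists c : T -> nat, forall u v, u != v -> (adj u v <-> c u != c v).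

(* disjoint union of an isolated vertex w and a complete bipartite graph with
   classes X and Y := T \ ({w} u X) of equal size *)
Definition isolated_plus_balanced_bipartite (T : finType) (adj : T -> T -> Prop) : Prop :=
  exists (w : T) (X : {set T}),
    [/\ w \notin X,
        #|X| = #|~: (w |: X)|,
        forall v, ~ adj w v /\ ~ adj v w &
        forall u v, u != w -> v != w -> u != v ->
          (adj u v <-> (u \in X) != (v \in X))].

(* Main.v *)
Require Import Defs.
From mathcomp Require Import all_boot zify.
From Stdlib Require Import Classical ClassicalEpsilon.
Set Implicit Arguments. Unset Strict Implicit. Unset Printing Implicit Defensive.

Ltac arith := repeat match goal with
  | H : is_true (_ <= _) |- _ => revert H
  | H : @eq nat _ _ |- _ => revert H
  | H : ~ (@eq nat _ _) |- _ => revert H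
  | H : _ |- _ => clear H
  end; lia.

Section Paths.
Variable V : finType.
Implicit Types (H : seq (V * V)) (U S : {set V}).

Definition cross U (e : V * V) : bool := (e.1 \in U) != (e.2 \in U).
Definition dc H U := count (cross U) H.

Fixpoint walk H (x : V) (vs : seq V) (es : seq nat) : bool :=
  match vs, es with
  | [::], [::] => true
  | v :: vs', e :: es' => joins H e x v && walk H v vs' es'
  | _, _ => false
  end.

Lemma walk_size H x vs es : walk H x vs es -> size es = size vs.
Proof.
elim: vs x es => [|v vs IH] x [|e es] //= /andP [_ w]; by rewrite (IH _ _ w).
Qed.

Lemma is_pathE H x y vs es :
  is_path H x y vs es <-> [/\ uniq (x :: vs), last x vs = y & walk H x vs es].
Proof.
rewrite /is_path; split.
  case=> u l sz hj; split => //.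
  elim: vs x es sz hj {u l} => [|v vs IH] x [|e es] //= [sz] hj.
  apply/andP; split; first by apply: (hj 0).
  apply: IH => // i lti.
  have := hj i.+1 lti; rewrite /=.
  have e1 : nth x (v :: vs) i = nth v (v :: vs) i by apply: set_nth_default; rewrite /= ltnW.
  have e2 : nth x vs i = nth v vs i by apply: set_nth_default; exact: lti.
  by rewrite e1 e2.
case=> u l w; split => //; first exact: walk_size w.
elim: vs x es w {u l} => [|v vs IH] x [|e es] //= /andP [j w] [|i] lti //=.
have := IH v es w i lti.
have e1 : nth x (v :: vs) i = nth v (v :: vs) i by apply: set_nth_default; rewrite /= ltnW.
have e2 : nth x vs i = nth v vs i by apply: set_nth_default; exact: lti.
by rewrite e1 e2.
Qed.

Lemma walk_cat H x vs1 vs2 es1 es2 : size es1 = size vs1 ->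
  walk H x (vs1 ++ vs2) (es1 ++ es2) = walk H x vs1 es1 && walk H (last x vs1) vs2 es2.
Proof.
elim: vs1 x es1 => [|v vs IH] x [|e es] //= [sz].
by rewrite IH // andbA.
Qed.

Lemma joins_lt H e a b : joins H e a b -> e < size H.
Proof. by case/andP. Qed.

Lemma joinsE H e a b : joins H e a b ->
  e < size H /\ (forall d, nth d H e = (a, b) \/ nth d H e = (b, a)).
Proof.
case/andP => lt /orP [] /eqP h; split => // d;
  rewrite (set_nth_default (a, a)) //; by [left|right].
Qed.

Lemma joins_intro H e a b d : e < size H -> nth d H e = (a, b) \/ nth d H e = (b, a) ->
  joins H e a b.
Proof.
move=> lt h; rewrite /joins lt /= (set_nth_default d) //.
by case: h => ->; rewrite eqxx ?orbT.
Qed.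

Lemma cross_nth_def H U e a b : cross U (nth (a, a) H e) = cross U (nth (b, b) H e).
Proof.
case: (ltnP e (size H)) => l; first by rewrite (set_nth_default (b, b)).
by rewrite !nth_default // /cross !eqxx.
Qed.

Lemma walk_cross H U x vs es : walk H x vs es -> x \in U -> last x vs \notin U ->
  exists2 e, e \in es & cross U (nth (x, x) H e).
Proof.
elim: vs x es => [|v vs IH] x [|e es] //=; first by move=> _ ->.
case/andP => j w xU lU.
case vU: (v \in U).
  have [e' e'in ce'] := IH v es w vU lU.
  exists e'; first by rewrite inE e'in orbT.
  by rewrite (cross_nth_def _ _ _ x v).
exists e; first by rewrite inE eqxx.
have [lt hh] := joinsE j.
by case: (hh (x, x)) => ->; rewrite /cross /= xU vU.
Qed.

Lemma subseq_flatten (T1 : Type) (T2 : eqType) (F G : T1 -> seq T2) (L : seq T1) :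
  (forall p, subseq (F p) (G p)) -> subseq (flatten (map F L)) (flatten (map G L)).
Proof. move=> h; elim: L => //= a L IH; exact: cat_subseq. Qed.

Lemma count_iota_nth H U d : cross U d = false ->
  count (fun t => cross U (nth d H t)) (iota 0 (size H)) = dc H U.
Proof.
move=> cd; rewrite /dc -{3}(mkseq_nth d H) /mkseq count_map; exact: eq_count.
Qed.

Lemma easy_dir H x y n U : edge_disjoint_paths H x y n -> x \in U -> y \notin U ->
  n <= dc H U.
Proof.
case=> P [szP hP uP] xU yU.
pose F (p : seq V * seq nat) := [seq e <- p.2 | cross U (nth (x, x) H e)].
pose C := [seq t <- iota 0 (size H) | cross U (nth (x, x) H t)].
have uF : uniq (flatten (map F P)).
  apply: subseq_uniq uP; apply: subseq_flatten => p; exact: filter_subseq.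
have sub : {subset flatten (map F P) <= C}.
  move=> e /flattenP [s /mapP [p pP ->]]; rewrite mem_filter => /andP [ce _].
  rewrite mem_filter ce mem_iota /= add0n.
  by case: ltnP => // l; move: ce; rewrite nth_default // /cross eqxx.
have := uniq_leq_size uF sub.
rewrite size_filter count_iota_nth ?/cross ?eqxx // => le.
apply: leq_trans le; rewrite -szP size_flatten /shape -map_comp.
elim: P {szP uP sub uF} hP => //= p P IH hP.
rewrite -addn1 addnC; apply: leq_add; last by apply: IH => q qP; apply: hP; rewrite inE qP orbT.
have /is_pathE [_ l w] := hP p (mem_head _ _).
have lU : last x p.1 \notin U by rewrite l.
have [e ein ce] := walk_cross w xU lU.
have eF : e \in F p by rewrite /F mem_filter ce ein.
by case: (F p) eF.
Qed.

End Paths.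

Section Kill.
Variable V : finType.
Implicit Types (H : seq (V * V)) (U S : {set V}).

Definition cutcond H x y n := forall U : {set V}, x \in U -> y \notin U -> n <= dc H U.
Definition nl H := count (fun e : V * V => e.1 != e.2) H.
Definition killall H (ks : seq nat) (z : V) :=
  foldr (fun t G => set_nth (z, z) G t (z, z)) H ks.

Lemma size_killall H ks z : all (fun t => t < size H) ks -> size (killall H ks z) = size H.
Proof.
elim: ks => //= t ks IH /andP [lt a]; rewrite size_set_nth IH //.
by apply/maxn_idPr.
Qed.

Lemma nth_killall H ks z d i : all (fun t => t < size H) ks -> i < size H ->
  nth d (killall H ks z) i = if i \in ks then (z, z) else nth d H i.
Proof.
move=> a lt; elim: ks a => //= t ks IH /andP [lt' a].
have sz : i < size (set_nth (z, z) (killall H ks z) t (z, z)).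
  by rewrite size_set_nth size_killall // leq_max lt orbT.
rewrite (set_nth_default (z, z)) // nth_set_nth /= inE.
case: (eqVneq i t) => //= _.
rewrite -(set_nth_default (z, z) d) ?size_killall // IH //.
Qed.

Lemma count_killall (p : pred (V * V)) H ks z : ~~ p (z, z) -> uniq ks ->
  all (fun t => t < size H) ks ->
  count p (killall H ks z) + count (fun t => p (nth (z, z) H t)) ks = count p H.
Proof.
move=> pz; elim: ks => //= [|t ks IH]; first by rewrite addn0.
case/andP => tks u /andP [lt a].
have lt' : t < size (killall H ks z) by rewrite size_killall.
rewrite count_set_nth_ltn // (negbTE pz) addn0.
rewrite nth_killall // (negbTE tks).
have := IH u a.
case pt: (p (nth (z, z) H t)) => /=; last by rewrite subn0.
have : 0 < count p (killall H ks z).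
  rewrite -has_count; apply/hasP; exists (nth (z, z) (killall H ks z) t).
    exact: mem_nth.
  by rewrite nth_killall // (negbTE tks).
move=> h1 h2; rewrite -h2; arith.
Qed.

Lemma walk_mono H H' x vs es : (forall e a b, a != b -> joins H' e a b -> joins H e a b) ->
  uniq (x :: vs) -> walk H' x vs es -> walk H x vs es.
Proof.
move=> hm; elim: vs x es => [|v vs IH] x [|e es] //= /andP [xn u] /andP [j w].
rewrite (hm _ _ _ _ j) /=; last by apply: contraNneq xn => ->; rewrite inE eqxx.
exact: IH.
Qed.

Lemma edp_mono H H' x y n : (forall e a b, a != b -> joins H' e a b -> joins H e a b) ->
  edge_disjoint_paths H' x y n -> edge_disjoint_paths H x y n.
Proof.
move=> hm [P [sz hP u]]; exists P; split => // p pP.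
have /is_pathE [u' l w] := hP p pP; apply/is_pathE; split => //.
exact: walk_mono w.
Qed.

Lemma walk_nonloop H x vs es e : walk H x vs es -> uniq (x :: vs) -> e \in es ->
  exists a b, a != b /\ joins H e a b.
Proof.
elim: vs x es => [|v vs IH] x [|e' es] //= /andP [j w] /andP [xn u].
rewrite inE => /orP [/eqP ->|ein]; last exact: IH w u ein.
exists x, v; split => //; by apply: contraNneq xn => ->; rewrite inE eqxx.
Qed.

Lemma walk_lt H x vs es : walk H x vs es -> all (fun t => t < size H) es.
Proof.
elim: vs x es => [|v vs IH] x [|e es] //= /andP [j w].
by rewrite (joins_lt j) (IH _ _ w).
Qed.

Lemma joins_killall H ks z e a b : all (fun t => t < size H) ks ->
  joins (killall H ks z) e a b -> a != b -> joins H e a b /\ e \notin ks.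
Proof.
move=> al j ab; have [lt hh] := joinsE j.
rewrite size_killall // in lt.
have := hh (z, z); rewrite nth_killall //.
case: ifP => eks.
  by case=> -[e1 e2]; move: ab; rewrite -e1 -e2 eqxx.
by move=> h; split => //; apply: joins_intro lt h.
Qed.

Lemma augment H x y n vs es : x != y -> is_path H x y vs es -> uniq es ->
  edge_disjoint_paths (killall H es x) x y n -> edge_disjoint_paths H x y n.+1.
Proof.
move=> xy /is_pathE [u l w] ues [P [sz hP uP]].
have al := walk_lt w.
exists ((vs, es) :: P); split => //=; first by rewrite sz.
  move=> p; rewrite inE => /orP [/eqP ->|pP]; first by apply/is_pathE.
  have /is_pathE [u' l' w'] := hP p pP; apply/is_pathE; split => //.
  apply: walk_mono w' => // e a b ab j; exact: (joins_killall al j ab).1.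
rewrite cat_uniq ues uP andbT /=.
apply/hasP => -[e ef ees]; case/flattenP: ef => s /mapP [p pP ->] ein.
have /is_pathE [u' _ w'] := hP p pP.
have [a [b [ab j]]] := walk_nonloop w' u' ein.
have [_ en] := joins_killall al j ab.
by move/negP: en.
Qed.

Lemma cut_killall H x y n es : all (fun t => t < size H) es -> uniq es ->
  cutcond H x y n.+1 ->
  (forall U, x \in U -> y \notin U -> count (fun t => cross U (nth (x, x) H t)) es <= 1) ->
  cutcond (killall H es x) x y n.
Proof.
move=> al ues cc h1 U xU yU.
have pz : ~~ cross U (x, x) by rewrite /cross eqxx.
have := count_killall pz ues al.
rewrite -/(dc _ _) -/(dc _ _) => e.
have := cc U xU yU; have := h1 U xU yU; arith.
Qed.

Lemma nl_killall H x es : all (fun t => t < size H) es -> uniq es ->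
  (exists2 e, e \in es & (nth (x, x) H e).1 != (nth (x, x) H e).2) ->
  nl (killall H es x) < nl H.
Proof.
move=> al ues [e ein ne].
have pz : ~~ ((fun e : V * V => e.1 != e.2) (x, x)) by rewrite /= eqxx.
have := @count_killall (fun e : V * V => e.1 != e.2) H es x pz ues al.
rewrite -/(nl _) -/(nl _) => <-.
rewrite -[X in X < _]addn0 ltn_add2l -has_count; apply/hasP; by exists e.
Qed.

End Kill.

Section Contract.
Variable V : finType.
Implicit Types (H : seq (V * V)) (U S : {set V}).

Definition cmap (f : V -> V) H := map (fun e => (f e.1, f e.2)) H.

Lemma size_cmap f H : size (cmap f H) = size H.
Proof. exact: size_map. Qed.

Lemma dc_cmap f H U : dc (cmap f H) U = dc H (f @^-1: U).
Proof. by rewrite /dc /cmap count_map; apply: eq_count => e; rewrite /cross /= !inE. Qed.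

Lemma cutcond_cmap f H x y n : f x = x -> f y = y -> cutcond H x y n ->
  cutcond (cmap f H) x y n.
Proof.
move=> fx fy cc U xU yU; rewrite dc_cmap; apply: cc; by rewrite inE ?fx ?fy.
Qed.

Lemma count_lt (T : eqType) (p q : pred T) (s : seq T) :
  (forall z, z \in s -> p z -> q z) -> (exists2 z, z \in s & q z && ~~ p z) ->
  count p s < count q s.
Proof.
elim: s => [_ [z]|a s IH] //= hpq [z zin /andP [qz pz]].
have hs : forall z, z \in s -> p z -> q z by move=> w ws; apply: hpq; rewrite inE ws orbT.
have le : count p s <= count q s.
  elim: s {IH zin hpq} hs => //= b s IH hs.
  apply: leq_add; last by apply: IH => w ws; apply: hs; rewrite inE ws orbT.
  by case pb: (p b) => //=; rewrite (hs b (mem_head _ _) pb).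
move: zin; rewrite inE => /orP [/eqP ez|zs].
  subst z; rewrite (negbTE pz) qz /= add0n add1n ltnS //.
have := IH hs (ex_intro2 _ _ z zs (introT andP (conj qz pz))).
case pa: (p a) => /=; first by rewrite (hpq a (mem_head _ _) pa); arith.
by move=> h; apply: leq_trans h _; rewrite leq_addl.
Qed.

Lemma nl_cmap_lt f H e : e \in H -> e.1 != e.2 -> f e.1 = f e.2 -> nl (cmap f H) < nl H.
Proof.
move=> eH ne fe; rewrite /nl /cmap count_map; apply: count_lt.
  move=> z _ /=; apply: contraNneq => ->; by [].
by exists e => //=; rewrite ne fe eqxx.
Qed.

Lemma walk_in G x vs es S : (forall e a b, joins G e a b -> b \in S) ->
  walk G x vs es -> all (mem S) vs.
Proof.
move=> h; elim: vs x es => [|v vs IH] x [|e es] //= /andP [j w].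
by rewrite (h _ _ _ j) (IH _ _ w).
Qed.

Lemma walk_sub G G' x vs es S : (forall e a b, a \in S -> b \in S -> joins G' e a b -> joins G e a b) ->
  x \in S -> all (mem S) vs -> walk G' x vs es -> walk G x vs es.
Proof.
move=> h; elim: vs x es => [|v vs IH] x [|e es] //= xS /andP [vS a] /andP [j w].
by rewrite (h _ _ _ xS vS j) (IH _ _ vS a w).
Qed.

Lemma walk_edges_in G x vs es S e : x \in S -> all (mem S) vs -> walk G x vs es -> e \in es ->
  e < size G /\ forall d, ((nth d G e).1 \in S) && ((nth d G e).2 \in S).
Proof.
elim: vs x es => [|v vs IH] x [|e' es] //= xS /andP [vS a] /andP [j w].
rewrite inE => /orP [/eqP ->|ein]; last exact: IH vS a w ein.
have [lt hh] := joinsE j; split => // d.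
by case: (hh d) => -> /=; rewrite xS vS.
Qed.

Lemma last_in x vs S : x \in S -> all (mem S) vs -> last x vs \in S.
Proof. by elim: vs x => //= v vs IH x _ /andP [vS a]; apply: IH. Qed.

Section Dec.
Variables (H : seq (V * V)) (U : {set V}) (x y : V).
Hypotheses (xy : x != y) (xU : x \in U) (yU : y \notin U).
Definition f1 v := if v \in U then v else y.
Definition f2 v := if v \in U then x else v.

Lemma f1U v : f1 v \in U -> f1 v = v /\ v \in U.
Proof. by rewrite /f1; case: ifP => // _ h; have := yU; rewrite h. Qed.

Lemma f1y v : f1 v = y -> v \notin U.
Proof. by rewrite /f1; case: ifP => // vU vy; have := yU; rewrite -vy vU. Qed.

Lemma f2nU v : f2 v \notin U -> f2 v = v /\ v \notin U.
Proof. by rewrite /f2; case: ifP => vU //; rewrite xU. Qed.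

Lemma f2x v : f2 v = x -> v \in U.
Proof. by rewrite /f2; case: ifP => vU h //; rewrite -vU h. Qed.

Lemma nth_cmap f d i : i < size H -> nth d (cmap f H) i = (f (nth d H i).1, f (nth d H i).2).
Proof. move=> lt; by rewrite /cmap (nth_map d). Qed.

Lemma dec1 vs es : is_path (cmap f1 H) x y vs es ->
  exists pre epre t w, [/\ vs = rcons pre y /\ es = rcons epre t, uniq (x :: pre),
    all (mem U) pre, walk H x pre epre &
    [/\ t < size H, w \notin U &
       (nth (x, x) H t = (last x pre, w) \/ nth (x, x) H t = (w, last x pre))]].
Proof.
case/is_pathE => u l w.
have szw := walk_size w.
case/lastP: vs u l w szw => [|pre v] u l w szw; first by move: xy; rewrite -l eqxx.
rewrite last_rcons in l; subst v.
case/lastP: es w szw => [|epre t] w szw; first by move: szw; rewrite size_rcons.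
move: szw; rewrite !size_rcons => -[szw].
rewrite -!cats1 walk_cat // in w; case/andP: w => w1 /= /andP [jt _].
have f1in : forall v, f1 v \in y |: U.
  by move=> v; rewrite /f1; case: ifP => vU; rewrite !inE ?vU ?eqxx ?orbT.
have jin : forall e a b, joins (cmap f1 H) e a b -> b \in y |: U.
  move=> e a b j; have [lt hh] := joinsE j; rewrite size_cmap in lt.
  by have := hh (x, x); rewrite nth_cmap // => -[] [e1 e2]; [rewrite -e2|rewrite -e1]; exact: f1in.
have preS : all (mem (y |: U)) pre := walk_in jin w1.
move: u => /= /andP [xn]; rewrite rcons_uniq => /andP [ypre upre].
have preU : all (mem U) pre.
  apply/allP => v vin; have := allP preS v vin; rewrite !inE => /orP [/eqP vy|//].
  by move: ypre; rewrite -vy vin.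
have upre' : uniq (x :: pre).
  by rewrite /= upre andbT; move: xn; rewrite mem_rcons inE negb_or => /andP [_ ->].
have inner : forall e a b, a \in U -> b \in U -> joins (cmap f1 H) e a b -> joins H e a b.
  move=> e a b aU bU j; have [lt hh] := joinsE j; rewrite size_cmap in lt.
  apply: (@joins_intro _ _ _ _ _ (x, x) lt).
  have := hh (x, x); rewrite nth_cmap //.
  case: (nth (x, x) H e) => c d /=; case=> -[ea eb]; [left|right];
  rewrite -ea -eb in aU bU *; have [-> _] := f1U aU; by have [-> _] := f1U bU.
have wH : walk H x pre epre := walk_sub inner xU preU w1.
have u0U : last x pre \in U := last_in xU preU.
have [lt hh] := joinsE jt; rewrite size_cmap in lt.
have := hh (x, x); rewrite nth_cmap //.
case E: (nth (x, x) H t) => [c d] /=; case=> -[e1 e2].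
  have c1U : f1 c \in U by rewrite e1.
  have [c1 _] := f1U c1U.
  exists pre, epre, t, d; split => //; split => //; first exact: f1y.
  by left; rewrite E -e1 c1.
have d1U : f1 d \in U by rewrite e2.
have [d1 _] := f1U d1U.
exists pre, epre, t, c; split => //; split => //; first exact: f1y.
by right; rewrite E -e2 d1.
Qed.

Lemma dec2 vs es : is_path (cmap f2 H) x y vs es ->
  exists v1 suf t esuf u', [/\ vs = v1 :: suf /\ es = t :: esuf, uniq (v1 :: suf),
    all (fun v => v \notin U) (v1 :: suf), last v1 suf = y /\ walk H v1 suf esuf &
    [/\ t < size H, u' \in U &
       (nth (x, x) H t = (u', v1) \/ nth (x, x) H t = (v1, u'))]].
Proof.
case/is_pathE => u l w0.
case: vs u l w0 => [|v1 suf] u l w0; first by move: xy; rewrite -l eqxx.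
case: es w0 => [|t esuf] w0 //; have /andP [jt w] := w0.
have f2in : forall v, f2 v \in x |: ~: U.
  by move=> v; rewrite /f2; case: ifP => vU; rewrite !inE ?vU ?eqxx ?orbT.
have jin : forall e a b, joins (cmap f2 H) e a b -> b \in x |: ~: U.
  move=> e a b j; have [lt hh] := joinsE j; rewrite size_cmap in lt.
  by have := hh (x, x); rewrite nth_cmap // => -[] [e1 e2]; [rewrite -e2|rewrite -e1]; exact: f2in.
have vsS := walk_in jin w0.
move: u => /= /andP [xn u].
have vsU : all (fun v => v \notin U) (v1 :: suf).
  apply/allP => v vin; have := allP vsS v vin; rewrite !inE => /orP [/eqP vx|//].
  by move: xn; rewrite -vx vin.
have vsU' : all (mem (~: U)) (v1 :: suf).
  apply/allP => v vin; have := allP vsU v vin; by rewrite -[mem (~: U) v]/(v \in ~: U) inE.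
have inner : forall e a b, a \in ~: U -> b \in ~: U -> joins (cmap f2 H) e a b -> joins H e a b.
  move=> e a b aU bU j; have [lt hh] := joinsE j; rewrite size_cmap in lt.
  apply: (@joins_intro _ _ _ _ _ (x, x) lt).
  have := hh (x, x); rewrite nth_cmap //.
  rewrite !inE in aU bU.
  case: (nth (x, x) H e) => c d /=; case=> -[ea eb]; [left|right];
  rewrite -ea -eb in aU bU *; have [-> _] := f2nU aU; by have [-> _] := f2nU bU.
move: vsU' => /= /andP [v1U sufU].
have wH : walk H v1 suf esuf := walk_sub inner v1U sufU w.
have [lt hh] := joinsE jt; rewrite size_cmap in lt.
have := hh (x, x); rewrite nth_cmap //.
have v1nU : v1 \notin U by move: v1U; rewrite inE.
case E: (nth (x, x) H t) => [c d] /=; case=> -[e1 e2].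
  have d1U : f2 d \notin U by rewrite e2.
  have [d1 _] := f2nU d1U.
  exists v1, suf, t, esuf, c; split => //; split => //; first exact: f2x.
  by left; rewrite E -e2 d1.
have c1U : f2 c \notin U by rewrite e1.
have [c1 _] := f2nU c1U.
exists v1, suf, t, esuf, d; split => //; split => //; first exact: f2x.
by right; rewrite E -e1 c1.
Qed.

End Dec.
End Contract.

Lemma flat_uniq (A B : eqType) (P : seq (A * seq B)) : uniq (flatten (map snd P)) ->
  (forall p, p \in P -> p.2 != [::]) ->
  uniq P /\ (forall p q e, p \in P -> q \in P -> e \in p.2 -> e \in q.2 -> p = q).
Proof.
elim: P => [|a P IH] //= u ne.
move: u; rewrite cat_uniq => /and3P [ua hna ur].
have ne' : forall p, p \in P -> p.2 != [::] by move=> p pP; apply: ne; rewrite inE pP orbT.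
have [uP hP] := IH ur ne'.
have noshare : forall q e, q \in P -> e \in a.2 -> e \in q.2 -> False.
  move=> q e qP ea eq; move/hasP: hna; apply; exists e => //.
  by apply/flattenP; exists q.2 => //; apply/mapP; exists q.
split.
  rewrite uP andbT; apply/negP => aP.
  have := ne a (mem_head _ _); case E: a.2 => [|e s] // _.
  by apply: (noshare a e aP); rewrite E inE eqxx.
move=> p q e; rewrite !inE => /orP [/eqP ->|pP] /orP [/eqP ->|qP] ep eq //.
- by case: (noshare q e qP ep eq).
- by case: (noshare p e pP eq ep).
- exact: hP pP qP ep eq.
Qed.

Lemma flatten_split (T1 : Type) (T2 : eqType) (F G : T1 -> seq T2) (L : seq T1) :
  perm_eq (flatten (map (fun p => F p ++ G p) L)) (flatten (map F L) ++ flatten (map G L)).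
Proof.
elim: L => //= a L IH.
rewrite -!catA perm_cat2l.
apply: (@perm_trans _ (G a ++ (flatten (map F L) ++ flatten (map G L)))).
  by rewrite perm_cat2l.
by rewrite perm_catCA.
Qed.

Lemma flatten_filter_subseq (A B : eqType) (F : A -> seq B) (p : pred A) (L : seq A) :
  subseq (flatten (map F (filter p L))) (flatten (map F L)).
Proof.
elim: L => //= a L IH; case: (p a) => /=.
  by rewrite subseq_cat2l.
apply: subseq_trans IH _; exact: suffix_subseq.
Qed.

Lemma uniq_flatten_sub (A B : eqType) (F : A -> seq B) (L L' : seq A) :
  uniq L' -> uniq L -> {subset L' <= L} -> uniq (flatten (map F L)) ->
  uniq (flatten (map F L')).
Proof.
move=> uL' uL sub uF.
have pe : perm_eq L' [seq z <- L | z \in L'].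
  apply: uniq_perm => //; first exact: filter_uniq.
  move=> z; rewrite mem_filter; case zL': (z \in L') => //=; by rewrite (sub z zL').
rewrite (perm_uniq (perm_flatten (perm_map F pe))).
exact: subseq_uniq (flatten_filter_subseq _ _ _) uF.
Qed.

Section Combine.
Variable V : finType.
Variables (H : seq (V * V)) (U : {set V}) (x y : V) (n : nat).
Variables (P1 P2 : seq (seq V * seq nat)).
Hypotheses (xy : x != y) (xU : x \in U) (yU : y \notin U) (dcn : dc H U = n).
Hypotheses (sz1 : size P1 = n) (hP1 : forall p, p \in P1 -> is_path (cmap (f1 U y) H) x y p.1 p.2)
  (uP1 : uniq (flatten (map snd P1))).
Hypotheses (sz2 : size P2 = n) (hP2 : forall p, p \in P2 -> is_path (cmap (f2 U x) H) x y p.1 p.2)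
  (uP2 : uniq (flatten (map snd P2))).

Lemma combine : edge_disjoint_paths H x y n.
Proof.
pose le (p : seq V * seq nat) := last 0 p.2.
pose fe (p : seq V * seq nat) := head 0 p.2.
have ne1 : forall p, p \in P1 -> p.2 != [::].
  move=> p pP; have [pre [epre [t [w [[_ ->] _ _ _ _]]]]] := dec1 xy xU yU (hP1 pP).
  by case: epre.
have ne2 : forall p, p \in P2 -> p.2 != [::].
  move=> p pP; have [v1 [suf [t [esuf [u' [[_ ->] _ _ _ _]]]]]] := dec2 xy xU (hP2 pP).
  by [].
have [uP1s hP1s] := flat_uniq uP1 ne1.
have [uP2s hP2s] := flat_uniq uP2 ne2.
pose C := [seq t <- iota 0 (size H) | cross U (nth (x, x) H t)].
have szC : size C = n.
  by rewrite size_filter count_iota_nth // /cross eqxx.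
have crossC : forall t u w, t < size H -> u \in U -> w \notin U ->
    nth (x, x) H t = (u, w) \/ nth (x, x) H t = (w, u) -> t \in C.
  move=> t u w lt uU wU h; rewrite mem_filter mem_iota /= add0n lt andbT.
  by case: h => ->; rewrite /cross /= uU (negbTE wU).
have leC : forall p, p \in P1 -> le p \in C.
  move=> p pP; have [pre [epre [t [w [[_ e2] _ preU _ [lt wU hh]]]]]] := dec1 xy xU yU (hP1 pP).
  rewrite /le e2 last_rcons; apply: crossC lt _ wU hh.
  apply: last_in => //.
have feC : forall p, p \in P2 -> fe p \in C.
  move=> p pP; have [v1 [suf [t [esuf [u' [[_ e2] _ vsU _ [lt u'U hh]]]]]]] := dec2 xy xU (hP2 pP).
  rewrite /fe e2 /=; apply: crossC lt u'U _ hh.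
  by move: vsU => /= /andP [].
have lein : forall p, p \in P1 -> le p \in p.2.
  move=> p pP; have := ne1 p pP; rewrite /le; case/lastP: p.2 => // s z _.
  by rewrite last_rcons mem_rcons mem_head.
have fein : forall p, p \in P2 -> fe p \in p.2.
  move=> p pP; have := ne2 p pP; rewrite /fe; case: p.2 => // z s _; exact: mem_head.
have ule : uniq (map le P1).
  rewrite map_inj_in_uniq // => p q pP qP e.
  apply: (hP1s p q (le p) pP qP (lein p pP)); rewrite e; exact: lein.
have ufe : uniq (map fe P2).
  rewrite map_inj_in_uniq // => p q pP qP e.
  apply: (hP2s p q (fe p) pP qP (fein p pP)); rewrite e; exact: fein.
have sub1 : {subset map le P1 <= C} by move=> z /mapP [p pP ->]; exact: leC.
have sub2 : {subset map fe P2 <= C} by move=> z /mapP [p pP ->]; exact: feC.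
have s1 : size C <= size (map le P1) by rewrite size_map szC sz1.
have s2 : size C <= size (map fe P2) by rewrite size_map szC sz2.
have [_ leq] := uniq_min_size ule sub1 s1.
have [_ feq] := uniq_min_size ufe sub2 s2.
have hasg : forall p, p \in P1 -> has (fun q => fe q == le p) P2.
  move=> p pP; have : le p \in map fe P2 by rewrite feq -leq; apply/mapP; exists p.
  by case/mapP => q qP e; apply/hasP; exists q => //; rewrite -e.
pose g p := nth ([::], [::]) P2 (find (fun q => fe q == le p) P2).
have gP : forall p, p \in P1 -> g p \in P2.
  by move=> p pP; apply: mem_nth; rewrite -has_find; exact: hasg.
have gfe : forall p, p \in P1 -> fe (g p) = le p.
  by move=> p pP; apply/eqP; exact: (nth_find _ (hasg p pP)).
pose E1 (p : seq V * seq nat) := take (size p.2).-1 p.2.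
pose comb p := (take (size p.1).-1 p.1 ++ (g p).1, E1 p ++ (g p).2).
have notU : forall v vs, all (fun v => v \notin U) vs -> v \in vs -> v \notin U.
  by move=> v vs a vin; have := allP a v vin.
exists (map comb P1); split.
- by rewrite size_map.
- move=> c /mapP [p pP ->].
  have [pre [epre [t [w [[e1 e2] upre preU wH [lt wU hh]]]]]] := dec1 xy xU yU (hP1 pP).
  have gpP := gP p pP.
  have [v1 [suf [t' [esuf [u' [[f1e f2e] usuf vsU [lsuf wsuf] [lt' u'U hh']]]]]]] :=
    dec2 xy xU (hP2 gpP).
  have tt' : t' = t by have := gfe p pP; rewrite /fe /le f2e e2 last_rcons.
  subst t'.
  have szpre := walk_size wH.
  rewrite /comb /E1 e1 e2 f1e f2e !size_rcons /= -!cats1 !take_size_cat //.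
  have v1U : v1 \notin U by apply: (notU v1 (v1 :: suf)); rewrite ?mem_head.
  apply/is_pathE; split.
  + rewrite -cat_cons cat_uniq upre usuf andbT; apply/negP => /hasP [v vin vin'].
    have vU : v \in U.
      move: vin'; rewrite inE => /orP [/eqP ->|vp] //; exact: (allP preU v vp).
    by have := notU v _ vsU vin; rewrite vU.
  + by rewrite last_cat.
  + rewrite walk_cat // wH /= wsuf andbT.
    apply: (@joins_intro _ _ _ _ _ (x, x) lt).
    have u0U : last x pre \in U := last_in xU preU.
    case: hh => E; rewrite E in hh'; case: hh' => -[ea eb].
    * by left; rewrite E eb.
    * by move: u0U; rewrite ea (negbTE v1U).
    * by move: u0U; rewrite eb (negbTE v1U).
    * by right; rewrite E ea.
- have -> : map snd (map comb P1) = map (fun p => E1 p ++ (g p).2) P1 by rewrite -map_comp.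
  rewrite (perm_uniq (flatten_split _ _ _)) cat_uniq; apply/and3P; split.
  + apply: subseq_uniq uP1; apply: subseq_flatten => p; exact: take_subseq.
  + apply/negP => /hasP -[e ein2 ein1].
    case/flattenP: ein1 => s /mapP [p pP ->] ein1.
    have [pre [epre [t [w [[e1 e2] upre preU wH [lt wU hh]]]]]] := dec1 xy xU yU (hP1 pP).
    move: ein1; rewrite /E1 e2 size_rcons /= -cats1 take_size_cat ?(walk_size wH) // => ein1.
    have [_ inU] := walk_edges_in xU preU wH ein1.
    case/flattenP: ein2 => s' /mapP [p' p'P ->] ein2.
    have [v1 [suf [t' [esuf [u' [[f1e f2e] usuf vsU [lsuf wsuf] [lt' u'U hh']]]]]]] :=
      dec2 xy xU (hP2 (gP p' p'P)).
    have v1U : v1 \notin U by apply: (notU v1 (v1 :: suf)); rewrite ?mem_head.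
    move: ein2; rewrite f2e inE => /orP [/eqP et|ein2].
      subst e; have := inU (x, x); by case: hh' => ->; rewrite /= (negbTE v1U) ?andbF.
    have vsU' : all (mem (~: U)) (v1 :: suf).
      apply/allP => v vin; have := allP vsU v vin.
      by rewrite -[mem (~: U) v]/(v \in ~: U) inE.
    move: vsU' => /= /andP [v1U' sufU].
    have [_ inU'] := walk_edges_in v1U' sufU wsuf ein2.
    have := inU (x, x); have := inU' (x, x); rewrite !inE.
    by case: ((nth (x, x) H e).1 \in U).
  + rewrite (map_comp snd g).
    apply: (@uniq_flatten_sub _ _ snd P2 (map g P1)) => //.
      rewrite map_inj_in_uniq // => p q pP qP e.
      have e' : le p = le q by rewrite -(gfe p pP) -(gfe q qP) e.
      apply: (hP1s p q (le p) pP qP (lein p pP)); rewrite e'; exact: lein.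
    by move=> z /mapP [p pP ->]; exact: gP.
Qed.
End Combine.

Section Menger.
Variable V : finType.
Implicit Types (H : seq (V * V)) (U S : {set V}).

Lemma dcC' H U : dc H (~: U) = dc H U.
Proof. by apply: eq_count => e; rewrite /cross !inE; case: (e.1 \in U); case: (e.2 \in U). Qed.

Lemma cutcond_sym H x y n : cutcond H x y n -> cutcond H y x n.
Proof. move=> cc U yU xU; rewrite -dcC'; apply: cc; by rewrite inE ?xU ?yU. Qed.

Lemma endpoint H x y n U a b : cutcond H x y n -> x \in U -> y \notin U -> dc H U <= n ->
  (forall e, e \in H -> e.1 != e.2 -> ~~ ((e.1 \in U) && (e.2 \in U))) ->
  ((a, b) \in H \/ (b, a) \in H) -> a \in U -> b \notin U -> a = x.
Proof.
move=> cc xU yU dU noin abH aU bU.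
case: (eqVneq a x) => // ax; exfalso.
have xU' : x \in U :\ a by rewrite !inE xU eq_sym ax.
have yU' : y \notin U :\ a by rewrite !inE (negbTE yU) andbF.
have := cc _ xU' yU'.
have lt : dc H (U :\ a) < dc H U.
  rewrite /dc; apply: count_lt.
    move=> [c d] eH /=; rewrite /cross /= !inE.
    case: (eqVneq c d) => [->|cd]; first by rewrite eqxx.
    have := noin _ eH cd; rewrite /=.
    case cU: (c \in U); case dU': (d \in U) => //=; by rewrite !andbF.
  case: abH => h; [exists (a, b)|exists (b, a)] => //;
    by rewrite /cross /= !inE aU (negbTE bU) eqxx /= ?andbF.
move: lt dU; arith.
Qed.

Lemma menger_step H x y n :
  (forall H' x' y' n', nl H' < nl H -> x' != y' -> cutcond H' x' y' n' ->
     edge_disjoint_paths H' x' y' n') ->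
  x != y -> cutcond H x y n -> edge_disjoint_paths H x y n.
Proof.
move=> IH xy cc.
case: n cc => [|n] cc; first by exists [::].
case: (classic (exists t, joins H t x y)) => [[t jt]|nxy].
  have [lt hh] := joinsE jt.
  have al : all (fun t => t < size H) [:: t] by rewrite /= lt.
  apply: (@augment _ _ _ _ _ [:: y] [:: t]) => //.
    by apply/is_pathE; split => //=; rewrite ?inE ?xy ?jt.
  apply: IH => //.
    apply: nl_killall => //; exists t; first exact: mem_head.
    by case: (hh (x, x)) => -> /=; rewrite // eq_sym.
  apply: cut_killall => // U xU yU /=; by case: (cross _ _).
case: (classic (exists t1 t2 v, joins H t1 x v /\ joins H t2 v y)) =>
  [[t1 [t2 [v [j1 j2]]]]|nxvy].
  have vx : v != x by apply/eqP => e; apply: nxy; exists t2; rewrite -e.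
  have vy : v != y by apply/eqP => e; apply: nxy; exists t1; rewrite -e.
  have [lt1 hh1] := joinsE j1; have [lt2 hh2] := joinsE j2.
  have t12 : t1 != t2.
    apply/eqP => e; subst t2.
    have h1 := hh1 (x, x); have h2 := hh2 (x, x).
    case: h1 => E1; rewrite E1 in h2; case: h2 => E2; have ea := congr1 fst E2; have eb := congr1 snd E2; rewrite /= in ea eb; move: xy vx vy; rewrite ?ea ?eb ?eqxx //.
  have al : all (fun t => t < size H) [:: t1; t2] by rewrite /= lt1 lt2.
  apply: (@augment _ _ _ _ _ [:: v; y] [:: t1; t2]) => //.
    apply/is_pathE; split => //=; last by rewrite j1 j2.
    by rewrite !inE !negb_or (eq_sym x v) vx xy vy.
    by rewrite /= ?inE ?t12 ?andbT.
  apply: IH => //.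
    apply: nl_killall => //; first by rewrite /= inE t12.
    exists t1; first exact: mem_head.
    by case: (hh1 (x, x)) => ->; rewrite //= eq_sym.
  apply: cut_killall => //; first by rewrite /= inE t12.
  move=> U xU yU /=.
  case: (hh1 (x, x)) => ->; case: (hh2 (x, x)) => ->; rewrite /cross /= xU (negbTE yU);
    by case: (v \in U).
case: (classic (exists t, [/\ t < size H, (nth (x, x) H t).1 != (nth (x, x) H t).2 &
                        cutcond (killall H [:: t] x) x y n.+1])) => [[t [lt nlp cc']]|ndel].
  have al : all (fun t => t < size H) [:: t] by rewrite /= lt.
  apply: (@edp_mono _ _ (killall H [:: t] x)).
    by move=> e a b ab j; exact: (joins_killall al j ab).1.
  apply: IH => //; apply: nl_killall => //; exists t => //; exact: mem_head.
case: (classic (exists U, [/\ x \in U, y \notin U, dc H U = n.+1,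
    (exists2 e, e \in H & (e.1 != e.2) && (e.1 \in U) && (e.2 \in U)) &
    (exists2 e, e \in H & (e.1 != e.2) && (e.1 \notin U) && (e.2 \notin U))])) =>
  [[U [xU yU dU [e1 e1H he1] [e2 e2H he2]]]|nsplit].
  have [P1 [sz1 h1 u1]] : edge_disjoint_paths (cmap (f1 U y) H) x y n.+1.
    apply: IH => //.
      apply: (nl_cmap_lt e2H); first by case/andP: he2 => /andP [].
      case/andP: he2 => /andP [_ a1] a2; by rewrite /f1 (negbTE a1) (negbTE a2).
    apply: cutcond_cmap => //; by rewrite /f1 ?xU ?(negbTE yU).
  have [P2 [sz2 h2 u2]] : edge_disjoint_paths (cmap (f2 U x) H) x y n.+1.
    apply: IH => //.
      apply: (nl_cmap_lt e1H); first by case/andP: he1 => /andP [].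
      case/andP: he1 => /andP [_ a1] a2; by rewrite /f2 a1 a2.
    apply: cutcond_cmap => //; by rewrite /f2 ?xU ?(negbTE yU).
  exact: (combine xy xU yU dU sz1 h1 u1 sz2 h2 u2).
exfalso.
have inc : forall t, t < size H -> (nth (x, x) H t).1 != (nth (x, x) H t).2 ->
  [|| (nth (x, x) H t).1 == x, (nth (x, x) H t).2 == x, (nth (x, x) H t).1 == y |
      (nth (x, x) H t).2 == y].
  move=> t lt nlp.
  have [U [xU yU dlt]] : exists U, [/\ x \in U, y \notin U & dc (killall H [:: t] x) U < n.+1].
    apply: NNPP => hn; apply: ndel; exists t; split => // U xU yU.
    rewrite leqNgt; apply/negP => hlt; apply: hn; by exists U.
  have al : all (fun t => t < size H) [:: t] by rewrite /= lt.
  have pz : ~~ cross U (x, x) by rewrite /cross eqxx.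
  have ck : dc (killall H [:: t] x) U + cross U (nth (x, x) H t) = dc H U.
    have := count_killall pz (isT : uniq [:: t]) al.
    by rewrite [count _ [:: t]]/= addn0.
  have cU := cc U xU yU.
  have ct : cross U (nth (x, x) H t).
    case ctb: (cross U (nth (x, x) H t)) => //.
    have ck0 : dc (killall H [:: t] x) U = dc H U by rewrite -ck ctb addn0.
    move: ck0 dlt cU; arith.
  have ck1 : dc (killall H [:: t] x) U + 1 = dc H U by rewrite -ck ct.
  have dU : dc H U <= n.+1 by move: ck1 dlt; arith.
  have nsU : ~ ((exists2 e, e \in H & (e.1 != e.2) && (e.1 \in U) && (e.2 \in U)) /\
      (exists2 e, e \in H & (e.1 != e.2) && (e.1 \notin U) && (e.2 \notin U))).
    move=> [h1 h2]; apply: nsplit; exists U; split => //; move: dU cU; arith.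
  have noin : (forall e, e \in H -> e.1 != e.2 -> ~~ ((e.1 \in U) && (e.2 \in U))) \/
      (forall e, e \in H -> e.1 != e.2 -> ~~ ((e.1 \in ~: U) && (e.2 \in ~: U))).
    apply: NNPP => hn; apply: nsU; split.
    - apply: NNPP => h1; apply: hn; left => e eH ne; apply/negP => hin; apply: h1.
      by exists e => //; case/andP: hin => h1' h2'; rewrite ne h1' h2'.
    - apply: NNPP => h1; apply: hn; right => e eH ne; apply/negP => hin; apply: h1.
      by exists e => //; case/andP: hin; rewrite !inE => h1' h2'; rewrite ne h1' h2'.
  have ccs := cutcond_sym cc.
  have dUc : dc H (~: U) <= n.+1 by rewrite dcC'.
  have yUc : y \in ~: U by rewrite inE.
  have xUc : x \notin ~: U by rewrite inE xU.
  have abH0 := mem_nth (x, x) lt.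
  move: ct abH0; case: (nth (x, x) H t) => a b /= ct abH.
  case aU: (a \in U).
  - have bU : b \notin U by move: ct; rewrite /cross /= aU; case: (b \in U).
    case: noin => noin.
      by rewrite (endpoint cc xU yU dU noin (or_introl abH) aU bU) eqxx.
    have bUc : b \in ~: U by rewrite inE.
    have aUc : a \notin ~: U by rewrite inE aU.
    by rewrite (endpoint ccs yUc xUc dUc noin (or_intror abH) bUc aUc) eqxx !orbT.
  - have bU : b \in U by move: ct; rewrite /cross /= aU; case: (b \in U).
    case: noin => noin.
      by rewrite (endpoint cc xU yU dU noin (or_intror abH) bU (negbT aU)) eqxx orbT.
    have aUc : a \in ~: U by rewrite inE aU.
    have bUc : b \notin ~: U by rewrite inE bU.
    by rewrite (endpoint ccs yUc xUc dUc noin (or_introl abH) aUc bUc) eqxx !orbT.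
have jsym : forall t a b, joins H t a b -> joins H t b a.
  move=> t a b j; have [lt hh] := joinsE j; apply: (@joins_intro _ _ _ _ _ (x, x) lt).
  by case: (hh (x, x)) => ->; [right|left].
pose N := [set v | has (fun t => joins H t x v) (iota 0 (size H))].
pose U0 := x |: N.
have inN : forall v t, joins H t x v -> v \in N.
  move=> v t j; rewrite inE; apply/hasP; exists t => //.
  by rewrite mem_iota /= add0n (joins_lt j).
have Nj : forall v, v \in N -> exists t, joins H t x v.
  by move=> v; rewrite inE => /hasP [t _ j]; exists t.
have yU0 : y \notin U0.
  rewrite !inE negb_or eq_sym xy /=; apply/negP => /hasP [t _ j]; apply: nxy; by exists t.
have xU0 : x \in U0 by rewrite !inE eqxx.
have := cc U0 xU0 yU0.
suff -> : dc H U0 = 0 by [].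
rewrite /dc; apply/eqP; rewrite -leqn0 leqNgt -has_count; apply/negP => /hasP [e eH ce].
case/(nthP (x, x)): eH => t lt Et.
have nlp : (nth (x, x) H t).1 != (nth (x, x) H t).2.
  by rewrite Et; apply/eqP => ee; move: ce; rewrite /cross ee eqxx.
have := inc t lt nlp; rewrite Et.
case: e ce Et {nlp} => a b ce Et /=.
have jt : joins H t a b by apply: (@joins_intro _ _ _ _ _ (x, x) lt); left.
case/or4P => /eqP E; subst.
- have bN := inN b t jt; rewrite inE in bN.
  by move: ce; rewrite /cross /= !inE eqxx bN orbT.
- have aN := inN a t (jsym _ _ _ jt); rewrite inE in aN.
  by move: ce; rewrite /cross /= !inE eqxx aN orbT.
- move: ce; rewrite /cross /= (negbTE yU0) => bU0.
  have : b \in U0 by move: bU0; case: (b \in U0).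
  rewrite !inE; case/orP => [/eqP bx|/hasP [t' _ j']].
    by apply: nxy; exists t; apply: jsym; rewrite -bx.
  by apply: nxvy; exists t', t, b; split => //; apply: jsym.
- move: ce; rewrite /cross /= (negbTE yU0) => aU0.
  have : a \in U0 by move: aU0; case: (a \in U0).
  rewrite !inE; case/orP => [/eqP ax|/hasP [t' _ j']].
    by apply: nxy; exists t; rewrite -ax.
  by apply: nxvy; exists t', t, a.
Qed.

Theorem menger H x y n : x != y -> cutcond H x y n -> edge_disjoint_paths H x y n.
Proof.
move: {2}(nl H) (leqnn (nl H)) => m; elim: m H x y n => [|m IH] H x y n hm xy cc.
  apply: menger_step => // H' x' y' n' hlt; move: hlt hm; arith.
apply: menger_step => // H' x' y' n' hlt xy' cc'; apply: IH => //; move: hlt hm; arith.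
Qed.


End Menger.

Section Cuts.
Variable V : finType.
Implicit Types (H : seq (V * V)) (U X Y : {set V}).


Lemma count_sum (T : Type) (p : pred T) (s : seq T) :
  count p s = \sum_(x <- s) (p x : nat).
Proof. by elim: s => [|a s IH]; rewrite ?big_nil ?big_cons //= IH. Qed.

Lemma dcC0 H U : dc H (~: U) = dc H U.
Proof. by apply: eq_count => e; rewrite /cross !inE; case: (e.1 \in U); case: (e.2 \in U). Qed.

Lemma dc_sub H X Y : dc H (X :&: Y) + dc H (X :|: Y) <= dc H X + dc H Y.
Proof.
rewrite /dc !count_sum -!big_split /=; apply: leq_sum => e _.
rewrite /cross !inE; case: (e.1 \in X); case: (e.1 \in Y); case: (e.2 \in X); by case: (e.2 \in Y).
Qed.

Definition phiG H (s : V) U := count (fun e => incident s e && (other s e \in U)) H.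

Lemma dc_posi H s X Y : s \notin X -> s \notin Y ->
  dc H (X :\: Y) + dc H (Y :\: X) + 2 * phiG H s (X :&: Y) <= dc H X + dc H Y.
Proof.
move=> sX sY.
rewrite /dc /phiG !count_sum big_distrr /= -!big_split /=; apply: leq_sum => e _.
rewrite /cross /incident /other !inE.
case: e => a b /=.
case: (eqVneq a s) => [->|has].
  rewrite (negbTE sX) (negbTE sY) /=.
  case: (b \in X); case: (b \in Y) => //.
case: (eqVneq b s) => [->|bs] /=.
  rewrite (negbTE sX) (negbTE sY) /=.
  case: (a \in X); case: (a \in Y) => //.
rewrite muln0 addn0.
case: (a \in X); case: (a \in Y); case: (b \in X); by case: (b \in Y).
Qed.

Lemma odd_count_xor (T : Type) (p q : pred T) (s : seq T) :
  odd (count (fun x => p x (+) q x) s) = odd (count p s) (+) odd (count q s).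
Proof.
elim: s => [|a s IH] //=; rewrite !oddD IH.
by case: (p a); case: (q a); case: (odd (count p s)); case: (odd (count q s)).
Qed.

Lemma dc_par H X Y : odd (dc H X) = odd (dc H (X :&: Y)) (+) odd (dc H (X :\: Y)).
Proof.
rewrite /dc -odd_count_xor; congr odd; apply: eq_count => e.
rewrite /cross !inE.
case: (e.1 \in X); case: (e.1 \in Y); case: (e.2 \in X); by case: (e.2 \in Y).
Qed.

Lemma dc_sadd H s U : loopless H -> s \notin U ->
  dc H (s |: U) + 2 * phiG H s U = dc H U + deg H s.
Proof.
move=> hl sU.
rewrite /dc /phiG /deg !count_sum big_distrr /= -!big_split /=; apply: eq_big_seq => e eH.
have := allP hl e eH.
rewrite /cross /incident /other !inE.
case: e eH => a b /= _ ab.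
case: (eqVneq a s) => [eas|has].
  subst a; rewrite ?eqxx (negbTE sU) /=.
  rewrite eq_sym in ab; rewrite (negbTE ab) /=; by case: (b \in U).
case: (eqVneq b s) => [ebs|bs] /=.
  subst b; rewrite ?eqxx (negbTE sU) /=; by case: (a \in U).
by rewrite muln0 !addn0.
Qed.

End Cuts.


Section Abstract.
Variables (V T : finType) (A : {set V}) (s : V) (k : nat) (d : {set V} -> nat) (xo : T -> V).
Implicit Types (U X Y Z : {set V}).
Hypothesis HsA : s \notin A.
Hypothesis HxA : forall t, xo t \in A.
Hypothesis Hsub : forall X Y, d (X :&: Y) + d (X :|: Y) <= d X + d Y.
Definition phiA U := #|[set t | xo t \in U]|.
Hypothesis Hposi : forall X Y, s \notin X -> s \notin Y ->
  d (X :\: Y) + d (Y :\: X) + 2 * phiA (X :&: Y) <= d X + d Y.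
Hypothesis Hpar : forall X Y, odd (d X) = odd (d (X :&: Y)) (+) odd (d (X :\: Y)).
Hypothesis Hsadd : forall U, s \notin U -> d (s |: U) + 2 * phiA U = d U + #|T|.
Definition sepA U := (A :&: U != set0) && (A :\: U != set0).
Hypothesis Hcut : forall U, sepA U -> 2 * k <= d U.
Hypothesis Hdeg : 3 < #|T|.

Definition dang X := [/\ s \notin X, sepA X & d X <= (2 * k).+1].
Definition Rel t u := exists X, [/\ dang X, xo t \in X & xo u \in X].

Lemma sepI U a b : a \in A -> a \in U -> b \in A -> b \notin U -> sepA U.
Proof.
move=> aA aU bA bU; apply/andP; split; apply/set0Pn.
  by exists a; rewrite inE aA aU.
by exists b; rewrite inE bA bU.
Qed.

Lemma sep_out U : sepA U -> exists2 b, b \in A & b \notin U.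
Proof. by case/andP=> _ /set0Pn [b]; rewrite inE => /andP [bU bA]; exists b. Qed.

Lemma sep_s U : sepA U -> sepA (s |: U).
Proof.
move=> sU; case/andP: (sU) => /set0Pn [a]; rewrite inE => /andP [aA aU] _.
have [b bA bU] := sep_out sU.
apply: (sepI aA _ bA); first by rewrite inE aU orbT.
rewrite !inE negb_or bU andbT; apply/eqP => bs; move: bA; rewrite bs; apply/negP; exact: HsA.
Qed.

Lemma phi_ge1 t U : xo t \in U -> 0 < phiA U.
Proof. by move=> tU; apply/card_gt0P; exists t; rewrite inE. Qed.

Lemma odd2k : odd (2 * k) = false.
Proof. by rewrite oddM. Qed.

Lemma Tlem e f g X Y : dang X -> dang Y -> xo e \in X -> xo f \in X -> xo f \in Y ->
  xo g \in Y -> ~ Rel e g ->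
  [/\ xo e \notin Y, xo g \notin X, A \subset X :|: Y & phiA (X :&: Y) <= 1].
Proof.
move=> [sX sepX dX] [sY sepY dY] eX fX fY gY nR.
have eY : xo e \notin Y by apply/negP => eY; apply: nR; exists Y; split; rewrite ?eY ?gY //; split.
have gX : xo g \notin X by apply/negP => gX; apply: nR; exists X; split; rewrite ?eX ?gX //; split.
have sXY : sepA (X :\: Y) by apply: (sepI (HxA e) _ (HxA f)); rewrite !inE ?eY ?eX ?fY.
have sYX : sepA (Y :\: X) by apply: (sepI (HxA g) _ (HxA f)); rewrite !inE ?gY ?gX ?fX.
have hp := Hposi sX sY. have c1 := Hcut sXY. have c2 := Hcut sYX.
have p1 : 0 < phiA (X :&: Y) by apply: (@phi_ge1 f); rewrite inE fX fY.
have phi1 : phiA (X :&: Y) <= 1 by arith.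
split => //.
apply/negPn/negP => nsub; apply: nR; exists (X :|: Y); split; last first.
- by rewrite inE gY orbT.
- by rewrite inE eX.
have [b bA bn] : exists2 b, b \in A & b \notin X :|: Y by apply/subsetPn.
split.
- by rewrite inE negb_or sX sY.
- by apply: (sepI (HxA e) _ bA bn); rewrite inE eX.
have par := Hpar X Y.
have dXe : d X = (2 * k).+1 by arith.
have dXYe : d (X :\: Y) = 2 * k by arith.
rewrite dXe dXYe odd2k /= addbF in par.
have sI : sepA (X :&: Y) by apply: (sepI (HxA f) _ (HxA e)); rewrite !inE ?fX ?fY // (negbTE eY) andbF.
have cI := Hcut sI.
have nI : d (X :&: Y) <> 2 * k by move=> h; rewrite h odd2k in par.
have hs := Hsub X Y. arith.
Qed.

Lemma C1 X Z h h' : dang X -> dang Z -> xo h \in X -> xo h \in Z -> xo h' \in Z ->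
  xo h' \notin X -> #|T| < 2 * phiA X -> A \subset X :|: Z.
Proof.
move=> [sX sepX dX] [sZ sepZ dZ] hX hZ h'Z h'X lt.
apply/negPn/negP => nsub.
have [b bA bn] : exists2 b, b \in A & b \notin X :|: Z by apply/subsetPn.
have [a aA aX] := sep_out sepX.
have sI : sepA (X :&: Z) by apply: (sepI (HxA h) _ aA); rewrite !inE ?hX ?hZ // (negbTE aX).
have sU : sepA (X :|: Z) by apply: (sepI (HxA h) _ bA bn); rewrite !inE ?hX.
have sUX : s \notin X :|: Z by rewrite inE negb_or sX sZ.
have ph : (phiA X).+1 <= phiA (X :|: Z).
  have -> : (phiA X).+1 = #|h' |: [set t | xo t \in X]| by rewrite cardsU1 inE h'X.
  apply: subset_leq_card; apply/subsetP => t; rewrite !inE => /orP [/eqP ->|->].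
    by rewrite h'Z orbT.
  by [].
have hsa := Hsadd sUX. have cs := Hcut (sep_s sU). have ci := Hcut sI.
have hs := Hsub X Z. arith.
Qed.

Theorem abstract_main :
  (forall e f g, Rel e f -> Rel f g -> e != g -> Rel e g) \/
  (exists f (P : {set T}), [/\ f \notin P, #|P| = #|~: (f |: P)|,
     (forall v, v != f -> Rel f v),
     (forall u v, u != f -> v != f -> u != v -> (Rel u v <-> (u \in P) = (v \in P)))
     & odd #|T|]).
Proof.
case: (classic (forall e f g, Rel e f -> Rel f g -> e != g -> Rel e g)) => [h|h]; [by left|right].
have [e [f [g [[X [dX eX fX]] [[Y [dY fY gY]] [eg nR]]]]]] :
  exists e f g, Rel e f /\ Rel f g /\ e != g /\ ~ Rel e g.
  apply: NNPP => hn; apply: h => e f g r1 r2 eg.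
  apply: NNPP => nr; apply: hn; by exists e, f, g.
have [eY gX AXY phi1] := Tlem dX dY eX fX fY gY nR.
have dX' := dX; have dY' := dY.
case: dX' => [sX sepX dXl]; case: dY' => [sY sepY dYl].
have [P PE] : exists P : {set T}, forall t, (t \in P) = (xo t \in X) && (xo t \notin Y).
  by exists [set t | (xo t \in X) && (xo t \notin Y)] => t; rewrite inE.
have [Q QE] : exists Q : {set T}, forall t, (t \in Q) = (xo t \in Y) && (xo t \notin X).
  by exists [set t | (xo t \in Y) && (xo t \notin X)] => t; rewrite inE.
have onlyf : forall t, xo t \in X -> xo t \in Y -> t = f.
  move=> t tX tY; move/card_le1_eqP: phi1 => h1; apply: h1; by rewrite !inE ?tX ?tY ?fX ?fY.
have cases : forall t, [|| t == f, t \in P | t \in Q].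
  move=> t; have := subsetP AXY _ (HxA t); rewrite PE QE !inE.
  case tX: (xo t \in X); case tY: (xo t \in Y) => //= _; rewrite ?orbT //.
  by rewrite (onlyf t tX tY) eqxx.
have fP : f \notin P by rewrite PE fY andbF.
have fQ : f \notin Q by rewrite QE fX andbF.
have PQ : forall t, t \in P -> t \notin Q.
  by move=> t0; rewrite PE QE => /andP [-> _]; rewrite /= andbF.
have phiX : phiA X = #|P|.+1.
  rewrite /phiA.
  have -> : [set t | xo t \in X] = f |: P.
    apply/setP => w; rewrite !inE PE; case: (eqVneq w f) => [->|tf] /=; first by rewrite fX.
    case: (boolP (xo w \in X)) => tX //=.
    case: (boolP (xo w \in Y)) => tY //=.
    by move: tf; rewrite (onlyf w tX tY) eqxx.
  by rewrite cardsU1 fP.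
have phiY : phiA Y = #|Q|.+1.
  rewrite /phiA.
  have -> : [set t | xo t \in Y] = f |: Q.
    apply/setP => w; rewrite !inE QE; case: (eqVneq w f) => [->|tf] /=; first by rewrite fY.
    case: (boolP (xo w \in Y)) => tY //=.
    case: (boolP (xo w \in X)) => tX //=.
    by move: tf; rewrite (onlyf w tX tY) eqxx.
  by rewrite cardsU1 fQ.
have CQ : ~: (f |: P) = Q.
  apply/setP => t; rewrite !inE negb_or.
  have := cases t; case: (eqVneq t f) => [->|tf] /=; first by rewrite (negbTE fQ).
  case tP: (t \in P) => /= tQ; first by rewrite (negbTE (PQ t tP)).
  by rewrite -tQ.
have cardT : #|T| = #|P| + #|Q| + 1.
  have := cardsC (f |: P); rewrite CQ cardsU1 fP; arith.
have PleQ : #|P| <= #|Q|.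
  have := Hsadd sX; have := Hcut (sep_s sepX); arith.
have QleP : #|Q| <= #|P|.
  have := Hsadd sY; have := Hcut (sep_s sepY); arith.
have PeQ : #|P| = #|Q| by arith.
have cross : forall u v, u \in P -> v \in Q -> ~ Rel u v.
  move=> u v uP vQ [Z [dZ uZ vZ]].
  move: (uP) (vQ); rewrite PE QE => /andP [uX uY] /andP [vY vX].
  have AXZ : A \subset X :|: Z by apply: (C1 dX dZ uX uZ vZ vX); arith.
  have AYZ : A \subset Y :|: Z by apply: (C1 dY dZ vY vZ uZ uY); arith.
  have Pin : P \subset [set t | xo t \in X :&: Z].
    apply/subsetP => t; rewrite PE !inE => /andP [tX tY]; rewrite tX /=.
    by have := subsetP AYZ _ (HxA t); rewrite inE (negbTE tY).
  have pXZ := subset_leq_card Pin.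
  case: dZ => [sZ sepZ dZl].
  have [a aA aZ] := sep_out sepZ.
  have aX : a \in X by have := subsetP AXZ _ aA; rewrite inE (negbTE aZ) orbF.
  have s1 : sepA (X :\: Z) by apply: (sepI aA _ (HxA u)); rewrite !inE ?aX ?aZ ?uZ.
  have s2 : sepA (Z :\: X) by apply: (sepI (HxA v) _ (HxA u)); rewrite !inE ?vX ?vZ ?uX.
  have hp := Hposi sX sZ. have c1 := Hcut s1. have c2 := Hcut s2.
  rewrite /phiA in hp. arith.
exists f, P; split => //.
- by rewrite CQ.
- move=> v vf; have := cases v; rewrite (negbTE vf) /=; case/orP => vin.
    by exists X; split => //; move: vin; rewrite PE => /andP [].
  by exists Y; split => //; move: vin; rewrite QE => /andP [].
- move=> u v uf vf uv.
  have := cases u; have := cases v; rewrite (negbTE uf) (negbTE vf) /=.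
  case vP: (v \in P) => /= vQ; case uP: (u \in P) => /= uQ.
  + split => // _; exists X; move: uP vP; rewrite !PE => /andP [-> _] /andP [-> _]; by split.
  + split => // r; exfalso; apply: (cross v u vP uQ).
    by case: r => Z [? ? ?]; exists Z; split.
  + by split => // r; exfalso; apply: (cross u v uP vQ).
  + split => // _; exists Y; move: uQ vQ; rewrite !QE => /andP [-> _] /andP [-> _]; by split.
- by rewrite cardT PeQ addn1 /= addnn odd_double.
Qed.

End Abstract.

Lemma count_split (T : Type) (p q : pred T) (s : seq T) :
  count p s = count (fun t => p t && q t) s + count (fun t => p t && ~~ q t) s.
Proof. elim: s => //= a s ->; case: (p a); case: (q a) => /=; arith. Qed.

Lemma count_one (b : bool) n i : i < n -> count (fun t => (t == i) && b) (iota 0 n) = b.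
Proof.
move=> lt; case: b.
  rewrite (eq_count (a2 := pred1 i)); last by move=> t; rewrite andbT.
  by rewrite count_uniq_mem ?iota_uniq // mem_iota /= add0n lt.
by rewrite (eq_count (a2 := pred0)) ?count_pred0 // => t; rewrite andbF.
Qed.

Lemma count_two (p : pred nat) n i j : i < n -> j < n -> i != j ->
  count (fun t => p t && ~~ ((t != i) && (t != j))) (iota 0 n) = p i + p j.
Proof.
move=> li lj ij.
rewrite (eq_count (a2 := predU (fun t => (t == i) && p i) (fun t => (t == j) && p j))); last first.
  move=> t /=; rewrite negb_and !negbK.
  have [->|ti] := eqVneq t i; first by rewrite ?eqxx ?(negbTE ij) /= ?andbT ?orbF.
  have [->|tj] := eqVneq t j; first by rewrite ?eqxx ?(negbTE ti) /= ?andbT.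
  by rewrite ?(negbTE ti) ?(negbTE tj) /= ?andbF.
have := count_predUI (fun t => (t == i) && p i) (fun t => (t == j) && p j) (iota 0 n).
rewrite (eq_count (a1 := predI _ _) (a2 := pred0)) ?count_pred0 ?addn0.
  by move=> ->; rewrite !count_one.
move=> t /=; case: (eqVneq t i) => [->|] //=; by rewrite (negbTE ij) andbF.
Qed.

Section Final.
Variables (V : finType) (G : seq (V * V)) (k : nat) (A : {set V}) (s : V).
Hypotheses (Hl : loopless G) (HsA : s \notin A)
  (Hp : forall x y, x \in A -> y \in A -> x != y -> edge_disjoint_paths G x y (2 * k))
  (He : forall e, e \in G -> (e.1 \in A) || (e.2 \in A)).

Definition xo (u : LVert G s) : V := other s (nth (s, s) G (val (val u))).

Lemma xoA u : xo u \in A.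
Proof.
have := He (mem_nth (s, s) (ltn_ord (val u))); have := valP u.
rewrite /xo /other /incident; case: (nth (s, s) G _) => a b /=.
case: (eqVneq a s) => [->|has] /=; first by rewrite (negbTE HsA).
by move=> /eqP bs; rewrite bs (negbTE HsA) orbF.
Qed.

Lemma card_phi (U : {set V}) : #|[set u : LVert G s | xo u \in U]| = phiG G s U.
Proof.
pose Q (i : 'I_(size G)) := incident s (nth (s, s) G i) && (other s (nth (s, s) G i) \in U).
have -> : #|[set u : LVert G s | xo u \in U]| = #|[set i | Q i]|.
  have E : [set val u | u in [set u : LVert G s | xo u \in U]] = [set i | Q i].
    apply/setP => i; rewrite [in RHS]inE.
    apply/imsetP/idP => [[u uin ->]|qi].
      by rewrite /Q (valP u); move: uin; rewrite inE.
    have inc : incident s (nth (s, s) G i) by case/andP: qi.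
    exists (exist _ i inc) => //; rewrite inE /xo /=; by case/andP: qi.
  by rewrite -E card_imset //; exact: val_inj.
rewrite -sum1dep_card big_mkcond /=.
rewrite (eq_bigr (fun i : 'I_(size G) => nat_of_bool (Q i))); last by move=> i _; case: (Q i).
rewrite -(big_mkord xpredT (fun i => nat_of_bool (incident s (nth (s, s) G i) &&
   (other s (nth (s, s) G i) \in U)))).
rewrite /index_iota subn0 -count_sum /phiG.
by rewrite -[in RHS](mkseq_nth (s, s) G) /mkseq count_map.
Qed.

Lemma cross_inc (W : {set V}) e : incident s e -> s \notin W -> cross W e = (other s e \in W).
Proof.
rewrite /incident /other /cross; case: e => a b /=.
case: (eqVneq a s) => [->|has] /=; first by move=> _ sW; rewrite (negbTE sW); case: (b \in W).
by move=> /eqP -> sW; rewrite (negbTE sW); case: (a \in W).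
Qed.

Lemma dc_lift (i j : nat) (W : {set V}) : i < size G -> j < size G -> i != j ->
  incident s (nth (s, s) G i) -> incident s (nth (s, s) G j) -> s \notin W ->
  dc (Defs.lift G s i j) W + 2 * ((other s (nth (s, s) G i) \in W) && (other s (nth (s, s) G j) \in W))
  = dc G W.
Proof.
move=> li lj ij inci incj sW.
have pz : cross W (s, s) = false by rewrite /cross eqxx.
rewrite /Defs.lift /dc /= count_map count_filter -/(dc G W) -(count_iota_nth G pz).
rewrite [in RHS](count_split _ (fun t => (t != i) && (t != j))) count_two //.
rewrite (cross_inc inci sW) (cross_inc incj sW).
set c1 := count _ (iota 0 (size G)).
rewrite {1}/cross /=.
case: (other s (nth (s, s) G i) \in W); case: (other s (nth (s, s) G j) \in W) => /=; arith.
Qed.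

Lemma Hcut (U : {set V}) : sepA A U -> 2 * k <= dc G U.
Proof.
case/andP => /set0Pn [a]; rewrite inE => /andP [aA aU] /set0Pn [b]; rewrite inE => /andP [bU bA].
have ab : a != b by apply: contraNneq bU => <-.
exact: easy_dir (Hp aA bA ab) aU bU.
Qed.

Lemma adm_iff (u v : LVert G s) : val u != val v ->
  admissible G A k s (val (val u)) (val (val v)) <-> ~ Rel A s k (dc G) xo u v.
Proof.
move=> uv.
have ij : val (val u) != val (val v) by [].
have li := ltn_ord (val u); have lj := ltn_ord (val v).
have inci := valP u; have incj := valP v.
split.
  move=> adm [X [[sX sepX dX] uX vX]].
  case/andP: (sepX) => /set0Pn [a]; rewrite inE => /andP [aA aX] /set0Pn [b].
  rewrite inE => /andP [bX bA].
  have ab : a != b by apply: contraNneq bX => <-.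
  have as' : a != s by apply: contraNneq HsA => <-.
  have bs' : b != s by apply: contraNneq HsA => <-.
  have := adm a b as' bs' ab; rewrite /tauA aA bA /= => ep.
  have := easy_dir ep aX bX.
  have := dc_lift li lj ij inci incj sX.
  rewrite -/(xo u) -/(xo v) uX vX /=; move: dX; arith.
move=> nR x y xs ys xy; rewrite /tauA.
case: ifP => [/andP [xA yA]|_]; last by exists [::].
have claim : forall W : {set V}, s \notin W -> sepA A W -> 2 * k <= dc (Defs.lift G s (val (val u)) (val (val v))) W.
  move=> W sW sepW.
  have hl := dc_lift li lj ij inci incj sW.
  have hc := Hcut sepW.
  rewrite -/(xo u) -/(xo v) in hl.
  case b: ((xo u \in W) && (xo v \in W)) in hl.
    have : ~ (dc G W <= (2 * k).+1).
      move=> dle; apply: nR; exists W; split => //; [by case/andP: b|by case/andP: b].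
    move: hl hc; rewrite /=; arith.
  move: hl hc; rewrite /=; arith.
apply: menger => // U xU yU.
case sU: (s \in U).
  rewrite -dcC'; apply: claim; first by rewrite inE sU.
  apply/andP; split; apply/set0Pn; [exists y; rewrite !inE yA yU | exists x; rewrite !inE xA xU] => //.
apply: claim; first by rewrite sU.
apply/andP; split; apply/set0Pn; [exists x; rewrite !inE xA xU | exists y; rewrite !inE yA yU] => //.
Qed.

Lemma final_main : 3 < deg G s ->
  complete_multipartite (@Ladj V G A k s) \/
  (isolated_plus_balanced_bipartite (@Ladj V G A k s) /\ odd (deg G s)).
Proof.
move=> Hdeg.
have cardT : #|{: LVert G s}| = deg G s.
  have := card_phi setT.
  have -> : [set u : LVert G s | xo u \in setT] = setT by apply/setP => u; rewrite !inE.
  rewrite cardsT => ->; rewrite /phiG /deg; apply: eq_count => e; by rewrite inE andbT.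
have phiE : forall U, phiA xo U = phiG G s U by move=> U; exact: card_phi.
have Hposi : forall X Y : {set V}, s \notin X -> s \notin Y ->
    dc G (X :\: Y) + dc G (Y :\: X) + 2 * phiA xo (X :&: Y) <= dc G X + dc G Y.
  by move=> X Y sX sY; rewrite phiE; exact: dc_posi.
have Hsadd : forall U : {set V}, s \notin U ->
    dc G (s |: U) + 2 * phiA xo U = dc G U + #|{: LVert G s}|.
  by move=> U sU; rewrite phiE cardT; exact: dc_sadd.
have Hd : 3 < #|{: LVert G s}| by rewrite cardT.
have Hsub : forall X Y : {set V}, dc G (X :&: Y) + dc G (X :|: Y) <= dc G X + dc G Y.
  by move=> X Y; exact: dc_sub.
have Hpar : forall X Y : {set V}, odd (dc G X) = odd (dc G (X :&: Y)) (+) odd (dc G (X :\: Y)).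
  by move=> X Y; exact: dc_par.
have vneq : forall u v : LVert G s, u != v -> val u != val v.
  by move=> u v; apply: contraNneq => /val_inj ->.
case: (abstract_main HsA xoA Hsub Hposi Hpar Hsadd Hcut Hd) =>
  [htrans|[f [P [fP cP hf hP oT]]]].
- left.
  pose R := Rel A s k (dc G) xo.
  have Rsym : forall u v, R u v -> R v u by move=> u v [X [dX uX vX]]; exists X.
  pose E (u v : LVert G s) := (u == v) ||
     (if excluded_middle_informative (R u v) then true else false).
  have EP : forall u v, E u v <-> (u = v \/ R u v).
    move=> u v; rewrite /E; case: excluded_middle_informative => r; rewrite ?orbT ?orbF.
      by split => // _; right.
    split; first by move/eqP; left.
    by case=> [->|//]; rewrite eqxx.
  have Esym : forall u v, E u v -> E v u.
    move=> u v /EP [->|r]; apply/EP; [by left|right; exact: Rsym].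
  have Etr : forall a b c, E a b -> E b c -> E a c.
    move=> a b c /EP [->|r1] // /EP [<-|r2]; first by apply/EP; right.
    case: (eqVneq a c) => [->|ac]; first by apply/EP; left.
    by apply/EP; right; apply: htrans r1 r2 ac.
  pose c (u : LVert G s) := find (fun w => E w u) (enum {: LVert G s}).
  have Eu : forall u, E u u by move=> u; apply/EP; left.
  have hasE : forall u, has (fun w => E w u) (enum {: LVert G s}).
    by move=> u; apply/hasP; exists u; rewrite ?mem_enum.
  have cE : forall u v, c u = c v -> E u v.
    move=> u v e.
    have h1 := nth_find u (hasE u); have h2 := nth_find u (hasE v).
    rewrite -/(c u) -/(c v) -e in h1 h2.
    exact: Etr (Esym _ _ h1) h2.
  have Ec : forall u v, E u v -> c u = c v.
    move=> u v euv; rewrite /c; apply: eq_find => w; apply/idP/idP => h.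
      exact: Etr h euv.
    exact: Etr h (Esym _ _ euv).
  exists c => u v uv; have vuv := vneq u v uv.
  rewrite /Ladj; split.
    move=> [_ adm]; have nR := (adm_iff vuv).1 adm.
    apply/eqP => cuv; have := cE u v cuv; case/EP => [e|r]; last exact: nR r.
    by move: uv; rewrite e eqxx.
  move=> cuv; split => //; apply/(adm_iff vuv) => r.
  by move: cuv; rewrite (Ec u v) ?eqxx //; apply/EP; right.
- right; split; last by rewrite -cardT.
  exists f, P; split => //.
  + move=> v; split.
      move=> [fv adm]; apply: ((adm_iff fv).1 adm); apply: hf.
      by apply: contraNneq fv => ->.
    move=> [vf adm]; apply: ((adm_iff vf).1 adm).
    have vf' : v != f by apply: contraNneq vf => ->.
    by have [X [dX fX vX]] := hf v vf'; exists X.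
  + move=> u v uf vf uv; have vuv := vneq u v uv; rewrite /Ladj; split.
      move=> [_ adm]; have nR := (adm_iff vuv).1 adm.
      apply/eqP => e; apply: nR; exact: (hP u v uf vf uv).2 e.
    move=> ne; split => //; apply/(adm_iff vuv) => r.
    by move: ne; rewrite ((hP u v uf vf uv).1 r) eqxx.
Qed.

End Final.


Unset Implicit Arguments.

Theorem theorem3p3 (V : finType) (G : seq (V * V)) (k : nat) (A : {set V}) (s : V) :
  loopless G ->
  0 < k ->
  A \proper [set: V] ->
  (forall x y, x \in A -> y \in A -> x != y -> edge_disjoint_paths G x y (2 * k)) ->
  (forall e, e \in G -> (e.1 \in A) || (e.2 \in A)) ->
  s \notin A ->
  3 < deg G s ->
  complete_multipartite (@Ladj V G A k s) \/
  (isolated_plus_balanced_bipartite (@Ladj V G A k s) /\ odd (deg G s)).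
Proof.
move=> Hl Hk HAp Hp He HsA Hdeg.
exact: (final_main Hl HsA Hp He Hdeg).
Qed.
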